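(* A standard playable enriched $Ł_n$-frame $\mathfrak F$ is truly playable if and only if the formula $[\varnothing]\phi\leftrightarrow[\mathcal O]\phi$ is valid in $\mathfrak F$ for every $\phi\in\mathsf{Form}_{\mathcal L^+}$.
   Context: $Ł_n=\{0,\frac1n,\dots,1\}$ with $\neg x=1-x$, $x\oplus y=\min(x+y,1)$, $x\odot y=\max(x+y-1,0)$, $x\to y=\min(1,1-x+y)$, $\wedge=\min$, applied pointwise; $0,1$ also constant functions; $\chi_Y$ is the characteristic function of $Y$. $N$ finite set of players, $|N|\ge2$. An $Ł_n$-valued effectivity function on a set $S$ is $E:\mathcal P N\times Ł_n^S\to Ł_n$. It is: outcome monotonic if $f\ge g$ implies $E(C,f)\ge E(C,g)$; $N$-maximal if $\neg E(\varnothing,\neg f)\le E(N,f)$; superadditive if $E(C_1,f)\wedge E(C_2,g)\le E(C_1\cup C_2,f\wedge g)$ whenever $C_1\cap C_2=\varnothing$; homogeneous if $E(C,f\oplus f)=E(C,f)\oplus E(C,f)$ and $E(C,f\odot f)=E(C,f)\odot E(C,f)$; has liveness if $E(C,1)=1$; has safety if $E(C,0)=0$; principal if there is $g$ with $\{f\mid E(\varnothing,f)=1\}=\{f\mid f\ge g\odot\cdots\odot g\ (n\text{ factors})\}$. Playable: first six; truly playable: playable and principal. Formulas of $\mathcal L^+$: $\phi::=1\mid p\mid\phi\to\phi\mid\neg\phi\mid[C]\phi\mid[\mathcal O]\phi$ ($p$ in a countably infinite set $\mathsf{Prop}$, $C\subseteq N$); $\phi\leftrightarrow\psi=(\phi\to\psi)\odot(\psi\to\phi)$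 with $\phi\odot\psi=\neg(\phi\to\neg\psi)$. An enriched $Ł_n$-frame is $(S,E,R)$ with $S\ne\varnothing$, $E(u)$ an $Ł_n$-valued effectivity function on $S$ for each $u\in S$, and $R\subseteq S\times S$; it is standard if $R=\{(u,v)\mid E(u)(\varnothing,\neg\chi_{\{v\}})=0\}$, and (truly) playable if every $E(u)$ is. A model on it adds $\mathrm{Val}:S\times\mathsf{Prop}\to Ł_n$ extended by the Łukasiewicz operations on $1,\neg,\to$, $\mathrm{Val}(u,[C]\phi)=E(u)(C,\mathrm{Val}(-,\phi))$ and $\mathrm{Val}(u,[\mathcal O]\phi)=\min\{\mathrm{Val}(v,\phi)\mid(u,v)\in R\}$ (minimum of the empty set being $1$). A formula is valid in a frame if its value is $1$ at every state of every model based on the frame. *)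

(* Defs.v *)
From Stdlib Require Import ClassicalEpsilon.
From mathcomp Require Import all_boot.
Set Implicit Arguments. Unset Strict Implicit. Unset Printing Implicit Defensive.

Definition pbool (P : Prop) : bool :=
  if excluded_middle_informative P then true else false.

Section Luk.
Variable n : nat.
(* The value k/n of Ł_n is encoded by the ordinal k : 'I_n.+1. *)
Definition L := 'I_n.+1.
Definition ltop : L := ord_max.
Definition lbot : L := ord0.
Definition lneg (x : L) : L := inord (n - x).
Definition loplus (x y : L) : L := inord (minn (x + y) n).
Definition lodot (x y : L) : L := inord ((x + y) - n).
Definition limp (x y : L) : L := inord (minn n (n - x + y)).
Definition lmin (x y : L) : L := inord (minn x y).
Definition lpow_n (x : L) : L := iter n.-1 (lodot x) x.

Section EffFun.
Variables (N : finType) (S : Type).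
Definition effun := {set N} -> (S -> L) -> L.
Definition chi (Y : S -> Prop) : S -> L := fun s => if pbool (Y s) then ltop else lbot.

Variable E : effun.
Definition outcome_monotonic : Prop :=
  forall C (f g : S -> L), (forall s, (g s <= f s)%N) -> (E C g <= E C f)%N.
Definition N_maximal : Prop :=
  forall f : S -> L, (lneg (E set0 (fun s => lneg (f s))) <= E setT f)%N.
Definition superadditive : Prop :=
  forall (C1 C2 : {set N}) (f g : S -> L), [disjoint C1 & C2] ->
    (minn (E C1 f) (E C2 g) <= E (C1 :|: C2) (fun s => lmin (f s) (g s)))%N.
Definition homogeneous : Prop :=
  forall C (f : S -> L),
    E C (fun s => loplus (f s) (f s)) = loplus (E C f) (E C f) /\
    E C (fun s => lodot (f s) (f s)) = lodot (E C f) (E C f).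
Definition liveness : Prop := forall C, E C (fun _ => ltop) = ltop.
Definition safety : Prop := forall C, E C (fun _ => lbot) = lbot.
Definition principal : Prop :=
  exists g : S -> L, forall f : S -> L,
    E set0 f = ltop <-> (forall s, (lpow_n (g s) <= f s)%N).
Definition playable : Prop :=
  outcome_monotonic /\ N_maximal /\ superadditive /\ homogeneous /\ liveness /\ safety.
Definition truly_playable : Prop := playable /\ principal.
End EffFun.

Definition standard (N : finType) (S : Type) (E : S -> effun N S) (R : S -> S -> Prop) :=
  forall u v, R u v <-> E u set0 (fun s => lneg (chi (fun w => w = v) s)) = lbot.

(* min { f v | R u v }, with min of the empty set = 1 *)
Definition boxO (S : Type) (R : S -> S -> Prop) (f : S -> L) (u : S) : L :=
  inord (\max_(k : 'I_n.+1 | pbool (forall v, R u v -> (k <= f v)%N)) k).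
End Luk.

Inductive form (N : finType) : Type :=
| FTop : form N
| FVar : nat -> form N
| FImp : form N -> form N -> form N
| FNeg : form N -> form N
| FBox : {set N} -> form N -> form N
| FBoxO : form N -> form N.

Definition FOdot (N : finType) (a b : form N) : form N := FNeg (FImp a (FNeg b)).
Definition FIff (N : finType) (a b : form N) : form N := FOdot (FImp a b) (FImp b a).

Fixpoint eval (n : nat) (N : finType) (S : Type) (E : S -> effun n N S)
  (R : S -> S -> Prop) (V : S -> nat -> L n) (phi : form N) : S -> L n :=
  match phi with
  | FTop => fun _ => ltop n
  | FVar p => fun u => V u p
  | FImp a b => fun u => limp (eval E R V a u) (eval E R V b u)
  | FNeg a => fun u => lneg (eval E R V a u)
  | FBox C a => fun u => E u C (eval E R V a)
  | FBoxO a => boxO R (eval E R V a)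
  end.

Definition valid_in (n : nat) (N : finType) (S : Type) (E : S -> effun n N S)
  (R : S -> S -> Prop) (phi : form N) : Prop :=
  forall (V : S -> nat -> L n) (u : S), eval E R V phi u = ltop n.

(* Main.v *)
Require Import Defs.
From Stdlib Require Import ClassicalEpsilon Classical.
From mathcomp Require Import all_boot zify.
Set Implicit Arguments. Unset Strict Implicit.

Lemma Lle n (x : L n) : (x : nat) <= n.
Proof. by rewrite -ltnS; exact: ltn_ord. Qed.

Lemma inordV n k : k <= n -> ((inord k : L n) : nat) = k.
Proof. by move=> h; rewrite inordK. Qed.

Lemma val_ltop n : ((ltop n) : nat) = n. Proof. by []. Qed.
Lemma val_lbot n : ((lbot n) : nat) = 0. Proof. by []. Qed.

Lemma val_lneg n (x : L n) : (lneg x : nat) = n - x.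
Proof. by rewrite /lneg inordV // leq_subr. Qed.
Lemma val_loplus n (x y : L n) : (loplus x y : nat) = minn (x + y) n.
Proof. by rewrite /loplus inordV // geq_minr. Qed.
Lemma val_lodot n (x y : L n) : (lodot x y : nat) = x + y - n.
Proof. rewrite /lodot inordV //; have := Lle x; have := Lle y. lia. Qed.
Lemma val_limp n (x y : L n) : (limp x y : nat) = minn n (n - x + y).
Proof. by rewrite /limp inordV // geq_minl. Qed.

Lemma iter_lt n (x : L n) j : (x : nat) < n ->
  (iter j (lodot x) x : nat) <= x - j.
Proof.
move=> hx; elim: j => [|j IH] /=; first by rewrite subn0.
rewrite val_lodot; lia.
Qed.

Lemma iter_top n j : iter j (lodot (ltop n)) (ltop n) = ltop n.
Proof.
elim: j => [|j IH] //=; rewrite IH; apply: val_inj; rewrite /= val_lodot /=; lia.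
Qed.

Lemma val_lpow n (x : L n) : 0 < n ->
  (lpow_n x : nat) = if (x : nat) == n then n else 0.
Proof.
move=> hn; case: eqP => h.
  have -> : x = ltop n by apply: val_inj.
  by rewrite /lpow_n iter_top.
have hx : (x : nat) < n by have := Lle x; lia.
have := iter_lt n.-1 hx; rewrite /lpow_n; lia.
Qed.

Lemma pboolP (P : Prop) : pbool P = true <-> P.
Proof. by rewrite /pbool; case: excluded_middle_informative. Qed.

Definition step n (b : bool) (x : L n) : L n := if b then lodot x x else loplus x x.
Fixpoint G n (m c : nat) (x : L n) : L n :=
  match m with 0 => x | m'.+1 => step (odd c) (G m' c./2 x) end.

Lemma G_val n m c (x : L n) : c < 2 ^ m -> (G m c x : nat) = minn (2 ^ m * x - c * n) n.
Proof.
elim: m c => [|m IH] c /=.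
  rewrite expn0 => hc; have -> : c = 0 by lia.
  have := Lle x; lia.
move=> hc.
have hc2 : c./2 < 2 ^ m by rewrite expnS in hc; have := odd_double_half c; lia.
have hcn : c * n = odd c * n + 2 * (c./2 * n).
  by rewrite -{1}(odd_double_half c) mulnDl -mul2n mulnA.
rewrite hcn expnS -mulnA.
move: (IH _ hc2) (Lle (G m c./2 x)).
set P := 2 ^ m * x; set Q := c./2 * n.
rewrite /step; case: (odd c) => /=.
  rewrite val_lodot; lia.
rewrite val_loplus; lia.
Qed.

Lemma G_top n m c (x : L n) : c < 2 ^ m -> ((G m c x : nat) == n) = (c.+1 * n <= 2 ^ m * x).
Proof. move=> h; rewrite G_val //; set P := 2 ^ m * x; set Q := c * n; rewrite mulSn; lia. Qed.

Lemma threshold n k : 0 < n -> 0 < k <= n -> exists m c, c < 2 ^ m /\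
  forall x, x <= n -> (c.+1 * n <= 2 ^ m * x) = (k <= x).
Proof.
move=> hn /andP [hk0 hkn].
have h2 : n < 2 ^ n := ltn_expl n (ltnSn 1).
set q := (k * 2 ^ n) %/ n.
have q1 : q * n <= k * 2 ^ n := leq_divM (k * 2 ^ n) n.
have q2 : k * 2 ^ n < q.+1 * n := ltn_ceil (k * 2 ^ n) hn.
have q0 : 0 < q by rewrite divn_gt0 //; apply: leq_trans (ltnW h2) _; rewrite leq_pmull.
exists n, q.-1; split.
  have : q * n <= 2 ^ n * n by apply: leq_trans q1 _; rewrite mulnC leq_mul2l hkn orbT.
  rewrite leq_mul2r; case/orP; lia.
move=> x hx; rewrite prednK //.
apply/idP/idP => h.
  rewrite leqNgt; apply/negP => hxk.
  have : 2 ^ n * x.+1 <= 2 ^ n * k by rewrite leq_mul2l hxk orbT.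
  rewrite mulnS; set T := 2 ^ n; move: h q2 h2; rewrite mulSn mulnC; lia.
apply: leq_trans q1 _; rewrite mulnC leq_mul2l h orbT //.
Qed.

Lemma G_hom n (S : Type) (E0 : (S -> L n) -> L n)
  (hom : forall f, E0 (fun s => loplus (f s) (f s)) = loplus (E0 f) (E0 f) /\
                   E0 (fun s => lodot (f s) (f s)) = lodot (E0 f) (E0 f)) m c f :
  E0 (fun s => G m c (f s)) = G m c (E0 f).
Proof.
elim: m c => [|m IH] c /=; first by [].
rewrite -IH /step; case: (odd c); by case: (hom (fun s => G m c./2 (f s))).
Qed.

Lemma key n (S : Type) (hn : 0 < n) (E0 : (S -> L n) -> L n) (g : S -> L n)
  (hom : forall f, E0 (fun s => loplus (f s) (f s)) = loplus (E0 f) (E0 f) /\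
                   E0 (fun s => lodot (f s) (f s)) = lodot (E0 f) (E0 f))
  (pr : forall f, E0 f = ltop n <-> (forall s, lpow_n (g s) <= f s)) f k :
  k <= n -> (k <= E0 f <-> forall s, (g s : nat) = n -> k <= f s).
Proof.
move=> hkn; case: (posnP k) => [->|hk]; first by [].
have hk2 : 0 < k <= n by rewrite hk hkn.
have := @threshold n k hn hk2. case=> m [c [hc hth]].
rewrite -(hth (E0 f) (Lle _)) -(G_top _ hc) -(G_hom hom).
have -> : forall y : L n, ((y : nat) == n) = (y == ltop n).
  by move=> y; apply/eqP/eqP => [h|->] //; apply: val_inj.
split.
  move/eqP/pr => h s gs; have := h s; rewrite val_lpow // gs eqxx.
  move=> hG; have : (G m c (f s) : nat) == n by rewrite eqn_leq Lle hG.
  by rewrite G_top // hth ?Lle.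
move=> h; apply/eqP/pr => s; rewrite val_lpow //; case: eqP => // gs.
have := h s gs; rewrite -(hth _ (Lle (f s))) -(G_top _ hc) => /eqP ->; by [].
Qed.

Lemma boxO_le n (S : Type) (R : S -> S -> Prop) (f : S -> L n) u k : k <= n ->
  (k <= boxO R f u <-> forall v, R u v -> k <= f v).
Proof.
move=> hk; rewrite /boxO inordK; last first.
  rewrite ltnS; apply/bigmax_leqP => i _; exact: Lle.
split.
  move=> h v Ruv; apply: (leq_trans h); apply/bigmax_leqP => i /pboolP Hi; exact: Hi.
move=> h; have hk' : k < n.+1 by [].
apply: (bigmax_sup (Ordinal hk')) => //=; apply/pboolP => v /h; by [].
Qed.

Lemma iff_top n (x y : L n) :
  lneg (limp (limp x y) (lneg (limp y x))) = ltop n <-> x = y.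
Proof.
split => [h|->].
  apply: val_inj; move: (congr1 (@nat_of_ord _) h) (Lle x) (Lle y).
  rewrite /= !(val_lneg, val_limp) /=; lia.
apply: val_inj; rewrite /= !(val_lneg, val_limp) /=; have := Lle y; lia.
Qed.

Lemma pbool_cases (P : Prop) : (pbool P = true /\ P) \/ (pbool P = false /\ ~ P).
Proof. rewrite /pbool; case: excluded_middle_informative; tauto. Qed.

Theorem mainTheorem14 (N : finType) (hN : 1 < #|N|) (n : nat) (hn : 0 < n)
  (S : Type) (hS : inhabited S) (E : S -> effun n N S) (R : S -> S -> Prop)
  (hstd : standard E R) (hplay : forall u, playable (E u)) :
  (forall u, truly_playable (E u)) <->
  (forall phi : form N, valid_in E R (FIff (FBox set0 phi) (FBoxO phi))).
Proof.
split.
  move=> htp phi V u /=; apply/iff_top.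
  set f := eval E R V phi.
  have [[_ [_ [_ [hom _]]]] [g pr]] := htp u.
  have K := key hn (hom set0) pr.
  have HR : forall v, R u v <-> (g v : nat) = n.
    move=> v; rewrite hstd; split => [h|gv].
      apply: NNPP => gv.
      have := K (fun s => lneg (chi n (fun w => w = v) s)) 1 hn; rewrite h /=.
      case=> _ /(_ _) H; suff : 0 < 0 by [].
      apply: H => s gs; rewrite val_lneg /chi.
      case: (pbool_cases (s = v)) => [[-> esv]|[-> _]].
        by subst; exfalso; exact: gv.
      by rewrite /= subn0.
    apply: val_inj => /=; apply/eqP; rewrite -leqn0 leqNgt.
    apply/negP => h1; have := (K _ 1 hn).1 h1 v gv.
    rewrite val_lneg /chi (_ : pbool (v = v) = true) ?subnn //; exact/pboolP.
  apply: val_inj; apply/eqP; rewrite eqn_leq; apply/andP; split.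
    apply/(boxO_le _ _ _ (Lle _)) => v /HR gv; exact: ((K f _ (Lle _)).1 (leqnn _) v gv).
  apply/(K f _ (Lle _)) => s gs; apply: (proj1 (boxO_le R f u (Lle _)) (leqnn _)); exact/HR.
move=> hv u; split; first exact: hplay.
exists (chi n (R u)) => f.
have := hv (@FVar N 0) (fun s _ => f s) u; rewrite /= => /iff_top ->.
split => [h s|h].
  rewrite val_lpow // /chi; case: (pbool_cases (R u s)) => [[-> Rus]|[-> _]] /=; last first.
    by case: eqP => // e; rewrite -e in hn.
  rewrite eqxx; move: (congr1 (@nat_of_ord _) h) => /= hb.
  have : n <= boxO R f u by rewrite hb.
  by move/(boxO_le R f u (leqnn n))/(_ s Rus).
apply: val_inj; apply/eqP; rewrite /= eqn_leq Lle /=; apply/(boxO_le R f u (leqnn n)) => v Ruv.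
have := h v; rewrite val_lpow // /chi.
case: (pbool_cases (R u v)) => [[-> _]|[_ []]] //=; by rewrite eqxx.
Qed.
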